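(* Let $\mathcal{F}$ be a family of finite lattices (considered up to isomorphism) that is closed under vertical sum and contains the singleton lattice. Let $f(n)$ and $f_{\mathrm{vi}}(n)$ be the numbers of $n$-element lattices and $n$-element vertically indecomposable lattices in $\mathcal{F}$, respectively. Let $N \ge 2$ be an integer, and let $\underline{f} \colon \mathbb{N}^+ \to \mathbb{N}^+$ be the sequence defined by $\underline{f}(1)=1$, \[ \underline{f}(n) = \sum_{k=2}^n f_{\mathrm{vi}}(k)\, \underline{f}(n-k+1) \quad \text{for } n=2,3,\ldots,N, \] and \[ \underline{f}(n) = \sum_{k=2}^N f_{\mathrm{vi}}(k)\, \underline{f}(n-k+1) \quad \text{for } n \ge N+1. \] Then $f(n) \ge \underline{f}(n)$ for all $n \ge 1$. Furthermore, the infinite sequence $\underline{f}$ is determined by $f_{\mathrm{vi}}(1), f_{\mathrm{vi}}(2), \ldots, f_{\mathrm{vi}}(N)$ through a homogeneous linear recurrence relation of order $N-1$ with constant coefficients.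
   Context: All lattices are finite, nonempty and unlabeled. The vertical sum $L+U$ of lattices $L$ and $U$ is obtained by identifying the top element of $L$ with the bottom element of $U$. A knot of a lattice $X$ is an element distinct from the top and bottom of $X$ that is comparable to every element of $X$; a lattice is vertically indecomposable if it has no knot. By convention the singleton lattice is counted as vertically indecomposable. *)

(* Defs.v *)
From mathcomp Require Import all_boot all_fingroup.
From mathcomp Require Import boolp.
Set Implicit Arguments. Unset Strict Implicit. Unset Printing Implicit Defensive.

Definition is_lattice (T : finType) (le : rel T) : Prop :=
  [/\ 0 < #|T|, [/\ reflexive le, antisymmetric le & transitive le],
      (forall x y, exists m, [/\ le m x, le m y &
                                 forall z, le z x -> le z y -> le z m]) &
      (forall x y, exists j, [/\ le x j, le y j &
                                 forall z, le x z -> le y z -> le j z])].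

Definition lattice_iso (T1 T2 : finType) (le1 : rel T1) (le2 : rel T2) : Prop :=
  exists f : T1 -> T2, bijective f /\ forall x y, le1 x y = le2 (f x) (f y).

Definition is_top (T : finType) (le : rel T) (x : T) : bool := [forall y, le y x].
Definition is_bot (T : finType) (le : rel T) (x : T) : bool := [forall y, le x y].

Definition single_le : rel unit := fun _ _ => true.

(* Vertical sum L + U: the carrier is L together with the elements of U
   other than its bottom (the bottom of U is identified with the top of L);
   every element of L lies below every element of U. *)
Definition vsum_le (T1 T2 : finType) (le1 : rel T1) (le2 : rel T2) :
  rel (T1 + {y : T2 | ~~ is_bot le2 y})%type :=
  fun a b =>
    match a, b with
    | inl x, inl y => le1 x y
    | inr x, inr y => le2 (val x) (val y)
    | inl _, inr _ => true
    | inr _, inl _ => false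
    end.

Arguments vsum_le {T1 T2} le1 le2 _ _.

Definition knot (T : finType) (le : rel T) (x : T) : bool :=
  [&& ~~ is_top le x, ~~ is_bot le x & [forall y, le x y || le y x]].
Definition vert_indec (T : finType) (le : rel T) : Prop :=
  ~ exists x, knot le x.

(* Counting n-element structures in a family up to isomorphism:
   relations on 'I_n, partitioned into isomorphism classes. *)
Definition lat_rel (n : nat) := {ffun 'I_n -> {ffun 'I_n -> bool}}.
Definition rel_iso (n : nat) (R1 R2 : lat_rel n) : bool :=
  [exists p : {perm 'I_n}, [forall x, [forall y, R1 x y == R2 (p x) (p y)]]].
Definition count_classes (P : forall T : finType, rel T -> Prop) (n : nat) : nat :=
  #|equivalence_partition (@rel_iso n)
      [set R : lat_rel n | `[< P 'I_n (fun x y => R x y) >]]|.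

Definition fam_count (F : forall T : finType, rel T -> Prop) (n : nat) : nat :=
  count_classes F n.
Definition fam_count_vi (F : forall T : finType, rel T -> Prop) (n : nat) : nat :=
  count_classes (fun T le => F T le /\ vert_indec le) n.

(* Main.v *)
Require Import Defs.
From mathcomp Require Import all_boot all_fingroup.
From mathcomp Require Import boolp zify.
Set Implicit Arguments. Unset Strict Implicit. Unset Printing Implicit Defensive.

Lemma iso_sym (T1 T2 : finType) (le1 : rel T1) (le2 : rel T2) :
  lattice_iso le1 le2 -> lattice_iso le2 le1.
Proof.
case=> f [[g fK gK] H]; exists g; split; first by exists f.
by move=> x y; rewrite H !gK.
Qed.

Lemma iso_trans (T1 T2 T3 : finType) (le1 : rel T1) (le2 : rel T2) (le3 : rel T3) :
  lattice_iso le1 le2 -> lattice_iso le2 le3 -> lattice_iso le1 le3.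
Proof.
case=> f [bf Hf] [h [bh Hh]]; exists (h \o f); split; first exact: bij_comp.
by move=> x y /=; rewrite Hf Hh.
Qed.

Lemma iso_top (T1 T2 : finType) (le1 : rel T1) (le2 : rel T2) f :
  bijective f -> (forall x y, le1 x y = le2 (f x) (f y)) ->
  forall x, is_top le1 x = is_top le2 (f x).
Proof.
case=> g fK gK H x; apply/forallP/forallP => Hy y.
  by rewrite -(gK y) -H.
by rewrite H.
Qed.

Lemma iso_bot (T1 T2 : finType) (le1 : rel T1) (le2 : rel T2) f :
  bijective f -> (forall x y, le1 x y = le2 (f x) (f y)) ->
  forall x, is_bot le1 x = is_bot le2 (f x).
Proof.
case=> g fK gK H x; apply/forallP/forallP => Hy y.
  by rewrite -(gK y) -H.
by rewrite H.
Qed.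

Lemma iso_knot (T1 T2 : finType) (le1 : rel T1) (le2 : rel T2) f :
  bijective f -> (forall x y, le1 x y = le2 (f x) (f y)) ->
  forall x, knot le1 x = knot le2 (f x).
Proof.
move=> bf H x; rewrite /knot (iso_top bf H) (iso_bot bf H); congr [&& _, _ & _].
case: bf => g fK gK; apply/forallP/forallP => Hy y.
  by rewrite -(gK y) -!H.
by rewrite !H.
Qed.

Lemma top_unique (T : finType) (le : rel T) x y :
  antisymmetric le -> is_top le x -> is_top le y -> x = y.
Proof.
by move=> A /forallP Hx /forallP Hy; apply: A; rewrite Hx Hy.
Qed.

Lemma lat_top (T : finType) (le : rel T) : is_lattice le -> exists t, is_top le t.
Proof.
case=> /card_gt0P [x0 _] [R _ Tr] _ Hj.
suff [t Ht]: exists t, forall y, y \in enum T -> le y t.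
  by exists t; apply/forallP => y; apply: Ht; rewrite mem_enum.
elim: (enum T) => [|a s [t Ht]]; first by exists x0.
have [j [H1 H2 _]] := Hj a t.
exists j => y; rewrite inE => /orP [/eqP -> //|/Ht ys].
exact: Tr ys H2.
Qed.

Lemma lat_bot (T : finType) (le : rel T) : is_lattice le -> exists t, is_bot le t.
Proof.
case=> /card_gt0P [x0 _] [R _ Tr] Hm _.
suff [t Ht]: exists t, forall y, y \in enum T -> le t y.
  by exists t; apply/forallP => y; apply: Ht; rewrite mem_enum.
elim: (enum T) => [|a s [t Ht]]; first by exists x0.
have [j [H1 H2 _]] := Hm a t.
exists j => y; rewrite inE => /orP [/eqP -> //|/Ht ys].
exact: Tr H2 ys.
Qed.

Lemma retract_le (X T X' T' : finType) (leX : rel X) (le : rel T)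
  (leX' : rel X') (le' : rel T') (phi : T -> T') (D : pred T) (D' : pred T')
  (i : X -> T) (i' : X' -> T') (p' : T' -> X') :
  antisymmetric leX -> reflexive leX ->
  (forall x y, leX x y = le (i x) (i y)) -> (forall x y, leX' x y = le' (i' x) (i' y)) ->
  (forall x, D (i x)) -> (forall y, D' y -> i' (p' y) = y) ->
  (forall x y, le x y = le' (phi x) (phi y)) -> (forall y, D y -> D' (phi y)) ->
  injective (fun x => p' (phi (i x))) /\
  forall x y, leX x y = leX' (p' (phi (i x))) (p' (phi (i y))).
Proof.
move=> As Rf Hi Hi' HD Hp Hphi HD'.
have E: forall x y, leX x y = leX' (p' (phi (i x))) (p' (phi (i y))).
  by move=> x y; rewrite Hi' !Hp ?HD' ?HD // -Hphi Hi.
split=> // x y Hxy; apply: As.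
by rewrite !E Hxy -!E !Rf.
Qed.

Lemma knot_fix (T T' : finType) (le : rel T) (le' : rel T') t t' f g :
  cancel f g -> cancel g f -> (forall x y, le x y = le' (f x) (f y)) ->
  antisymmetric le' ->
  (forall x, knot le x -> le t x) -> (forall x, knot le x -> knot le t) ->
  (~~ knot le t -> is_top le t) ->
  (forall x, knot le' x -> le' t' x) -> (forall x, knot le' x -> knot le' t') ->
  (~~ knot le' t' -> is_top le' t') -> f t = t'.
Proof.
move=> fK gK H As' K1 K2 K3 K1' K2' K3'.
have bf : bijective f by exists g.
have bg : bijective g by exists f.
have H' : forall x y, le' x y = le (g x) (g y) by move=> x y; rewrite H !gK.
have [kt|nkt] := boolP (knot le t).
  have kft : knot le' (f t) by rewrite -(iso_knot bf H).
  have kt' := K2' _ kft.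
  apply: As'; rewrite K1' // andbT.
  have kgt' : knot le (g t') by rewrite -(iso_knot bg H').
  by rewrite -(gK t') -H K1.
have nkt' : ~~ knot le' t'.
  apply/negP => kt'; move/negP: nkt; apply; apply: (K2 (g t')).
  by rewrite -(iso_knot bg H').
apply: (top_unique As' _ (K3' nkt')).
by rewrite -(iso_top bf H) K3.
Qed.


Definition VT (T1 T2 : finType) (leB : rel T2) := (T1 + {y : T2 | ~~ is_bot leB y})%type.

Lemma vsum_antisym (T1 T2 : finType) (leA : rel T1) (leB : rel T2) :
  antisymmetric leA -> antisymmetric leB -> antisymmetric (vsum_le leA leB).
Proof.
move=> AA AB [a|a] [b|b] //=; first by move/AA ->.
by move/AB => E; congr inr; apply: val_inj.
Qed.

Lemma vsum_refl (T1 T2 : finType) (leA : rel T1) (leB : rel T2) :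
  reflexive leA -> reflexive leB -> reflexive (vsum_le leA leB).
Proof. by move=> RA RB [a|a] /=. Qed.

Lemma vsum_K1 (T1 T2 : finType) (leA : rel T1) (leB : rel T2) tA :
  vert_indec leA -> forall x, knot (vsum_le leA leB) x -> vsum_le leA leB (inl tA) x.
Proof.
move=> VI [a|s] //= /and3P [nt nb /forallP cmp].
apply/negPn/negP => nle; apply: VI; exists a.
apply/and3P; split.
- by apply/negP => /forallP /(_ tA); apply/negP.
- apply/negP => /forallP Hb; move/negP: nb; apply; apply/forallP => -[b|b] //=.
- by apply/forallP => b; exact: (cmp (inl b)).
Qed.

Lemma vsum_K2' (T1 T2 : finType) (leA : rel T1) (leB : rel T2) tA :
  1 < #|T1| -> is_top leA tA -> antisymmetric leA ->
  forall s : {y : T2 | ~~ is_bot leB y}, knot (vsum_le leA leB) (inl tA).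
Proof.
move=> c2 /forallP Ht AA s; apply/and3P; split.
- by apply/negP => /forallP /(_ (inr s)).
- have : 0 < #|[predD1 T1 & tA]| by move: c2; rewrite (cardD1 tA) inE.
  case/card_gt0P => a; rewrite !inE => /andP [ne _].
  apply/negP => /forallP /(_ (inl a)) /= le1.
  by move/eqP: ne; apply; apply: AA; rewrite le1 Ht.
- by apply/forallP => -[b|b] //=; rewrite Ht orbT.
Qed.

Lemma vsum_K2 (T1 T2 : finType) (leA : rel T1) (leB : rel T2) tA :
  1 < #|T1| -> is_top leA tA -> antisymmetric leA -> vert_indec leA ->
  forall x, knot (vsum_le leA leB) x -> knot (vsum_le leA leB) (inl tA).
Proof.
move=> c2 Ht AA VI [a|s] kx; last exact: vsum_K2'.
have := vsum_K1 tA VI kx => /= le1.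
have E : a = tA by apply: AA; rewrite le1 (forallP Ht).
by rewrite E in kx.
Qed.

Lemma vsum_K3 (T1 T2 : finType) (leA : rel T1) (leB : rel T2) tA :
  1 < #|T1| -> is_top leA tA -> antisymmetric leA ->
  ~~ knot (vsum_le leA leB) (inl tA) -> is_top (vsum_le leA leB) (inl tA).
Proof.
move=> c2 Ht AA nk; apply/forallP => -[b|s] /=; first by rewrite (forallP Ht).
by move/negP: nk; case; apply: vsum_K2'.
Qed.

Definition pA (T1 T2 : finType) (leB : rel T2) (tA : T1) (v : VT T1 leB) : T1 :=
  match v with inl a => a | inr _ => tA end.
Definition iB (T1 T2 : finType) (leB : rel T2) (tA : T1) (b : T2) : VT T1 leB :=
  match insub b with Some s => inr s | None => inl tA end.
Definition pB (T1 T2 : finType) (leB : rel T2) (bB : T2) (v : VT T1 leB) : T2 :=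
  match v with inl _ => bB | inr s => val s end.

Lemma A3 (T1 T2 : finType) (leA : rel T1) (leB : rel T2) tA (y : VT T1 leB) :
  vsum_le leA leB y (inl tA) -> inl (pA tA y) = y.
Proof. by case: y. Qed.

Lemma B1 (T1 T2 : finType) (leA : rel T1) (leB : rel T2) tA :
  reflexive leA -> transitive leB ->
  forall x y, leB x y = vsum_le leA leB (iB leB tA x) (iB leB tA y).
Proof.
move=> RA TB x y; rewrite /iB.
case: insubP => [s nbx ex|]; case: insubP => [s' nby ey|] /=.
- by rewrite ex ey.
- rewrite negbK => hby; apply/negP => lxy; move/negP: nbx; apply.
  by apply/forallP => z; apply: TB lxy (forallP hby z).
- by rewrite negbK => /forallP hx; rewrite hx.
- by move=> _; rewrite negbK => /forallP hx; rewrite hx RA.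
Qed.

Lemma B2 (T1 T2 : finType) (leA : rel T1) (leB : rel T2) tA x :
  reflexive leA -> vsum_le leA leB (inl tA) (iB leB tA x).
Proof. by move=> RA; rewrite /iB; case: insubP => [s _ _|_] /=. Qed.

Lemma B3 (T1 T2 : finType) (leA : rel T1) (leB : rel T2) tA bB (y : VT T1 leB) :
  antisymmetric leA -> is_top leA tA -> is_bot leB bB ->
  vsum_le leA leB (inl tA) y -> iB leB tA (pB bB y) = y.
Proof.
move=> AA Ht Hb; case: y => [a|s] /=.
  move=> la; have -> : a = tA by apply: AA; rewrite la (forallP Ht).
  by rewrite /iB; case: insubP => //; rewrite Hb.
by move=> _; rewrite /iB valK.
Qed.

Lemma vsum_parts (T1 T2 T1' T2' : finType) (leA : rel T1) (leB : rel T2)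
  (leA' : rel T1') (leB' : rel T2') :
  is_lattice leA -> vert_indec leA -> 1 < #|T1| -> is_lattice leB ->
  is_lattice leA' -> vert_indec leA' -> 1 < #|T1'| -> is_lattice leB' ->
  lattice_iso (vsum_le leA leB) (vsum_le leA' leB') ->
  #|T1| = #|T1'| /\ lattice_iso leA leA' /\ lattice_iso leB leB'.
Proof.
move=> LA VA cA LB LA' VA' cA' LB' [f [[g fK gK] H]].
have [tA Ht] := lat_top LA; have [bB Hb] := lat_bot LB.
have [tA' Ht'] := lat_top LA'; have [bB' Hb'] := lat_bot LB'.
case: LA => _ [RA AA TA] _ _; case: LB => _ [RB AB TB] _ _.
case: LA' => _ [RA' AA' TA'] _ _; case: LB' => _ [RB' AB' TB'] _ _.
have H' : forall x y, vsum_le leA' leB' x y = vsum_le leA leB (g x) (g y).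
  by move=> x y; rewrite H !gK.
have ft : f (inl tA) = inl tA'.
  apply: (knot_fix fK gK H (vsum_antisym AA' AB')).
  - exact: vsum_K1.
  - exact: vsum_K2.
  - exact: vsum_K3.
  - exact: vsum_K1.
  - exact: vsum_K2.
  - exact: vsum_K3.
have gt : g (inl tA') = inl tA by rewrite -ft fK.
have [injA leAA] := retract_le (leX:=leA) (le:=vsum_le leA leB) (leX':=leA')
  (le':=vsum_le leA' leB') (phi:=f) (D:=fun v => vsum_le leA leB v (inl tA))
  (D':= fun v => vsum_le leA' leB' v (inl tA')) (i:=inl) (i':=inl)
  (p':=@pA _ _ leB' tA') AA RA (fun x y => erefl) (fun x y => erefl)
  (fun x => forallP Ht x) (@A3 _ _ leA' leB' tA') H
  (fun y (Dy : vsum_le leA leB y (inl tA)) => etrans (etrans (congr1 (vsum_le leA' leB' (f y)) (esym ft)) (esym (H _ _))) Dy).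
have [injA' _] := retract_le (leX:=leA') (le:=vsum_le leA' leB') (leX':=leA)
  (le':=vsum_le leA leB) (phi:=g) (D:=fun v => vsum_le leA' leB' v (inl tA'))
  (D':= fun v => vsum_le leA leB v (inl tA)) (i:=inl) (i':=inl)
  (p':=@pA _ _ leB tA) AA' RA' (fun x y => erefl) (fun x y => erefl)
  (fun x => forallP Ht' x) (@A3 _ _ leA leB tA) H'
  (fun y (Dy : vsum_le leA' leB' y (inl tA')) => etrans (etrans (congr1 (vsum_le leA leB (g y)) (esym gt)) (esym (H' _ _))) Dy).
have cAA : #|T1| = #|T1'|.
  by apply/eqP; rewrite eqn_leq (leq_card _ injA) (leq_card _ injA').
split=> //; split.
  exists (fun x => @pA _ _ leB' tA' (f (inl x))); split=> //.
  by apply: inj_card_bij => //; rewrite cAA.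
have [injB leBB] := retract_le (leX:=leB) (le:=vsum_le leA leB) (leX':=leB')
  (le':=vsum_le leA' leB') (phi:=f) (D:=fun v => vsum_le leA leB (inl tA) v)
  (D':= fun v => vsum_le leA' leB' (inl tA') v) (i:=iB leB tA) (i':=iB leB' tA')
  (p':=@pB _ _ leB' bB') AB RB (@B1 _ _ leA leB tA RA TB) (@B1 _ _ leA' leB' tA' RA' TB')
  (fun x => @B2 _ _ leA leB tA x RA) (fun y => @B3 _ _ leA' leB' tA' bB' y AA' Ht' Hb') H
  (fun y (Dy : vsum_le leA leB (inl tA) y) => etrans (etrans (congr1 (vsum_le leA' leB'^~ (f y)) (esym ft)) (esym (H _ _))) Dy).
have [injB' _] := retract_le (leX:=leB') (le:=vsum_le leA' leB') (leX':=leB)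
  (le':=vsum_le leA leB) (phi:=g) (D:=fun v => vsum_le leA' leB' (inl tA') v)
  (D':= fun v => vsum_le leA leB (inl tA) v) (i:=iB leB' tA') (i':=iB leB tA)
  (p':=@pB _ _ leB bB) AB' RB' (@B1 _ _ leA' leB' tA' RA' TB') (@B1 _ _ leA leB tA RA TB)
  (fun x => @B2 _ _ leA' leB' tA' x RA') (fun y => @B3 _ _ leA leB tA bB y AA Ht Hb) H'
  (fun y (Dy : vsum_le leA' leB' (inl tA') y) => etrans (etrans (congr1 (vsum_le leA leB^~ (g y)) (esym gt)) (esym (H' _ _))) Dy).
exists (fun x => @pB _ _ leB' bB' (f (iB leB tA x))); split=> //.
apply: inj_card_bij => //.
by rewrite (leq_card _ injB').
Qed.

Definition rr (n : nat) (R : lat_rel n) : rel 'I_n := fun x y => R x y.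

Definition to_rel (T : finType) (le : rel T) (n : nat) : lat_rel n :=
  [ffun i : 'I_n => [ffun j : 'I_n =>
     match nth None (map Some (enum T)) i, nth None (map Some (enum T)) j with
     | Some a, Some b => le a b | _, _ => false end]].

Lemma to_rel_iso (T : finType) (le : rel T) (n : nat) (H : #|T| = n) :
  lattice_iso le (rr (to_rel le n)).
Proof.
exists (fun x => cast_ord H (enum_rank x)); split.
  apply: bij_comp; first by exists (cast_ord (esym H)); [exact: cast_ordK|exact: cast_ordKV].
  by exists enum_val; [exact: enum_rankK|exact: enum_valK].
have E : forall x : T, nth None (map Some (enum T)) (cast_ord H (enum_rank x)) = Some x.
  move=> x; rewrite /= (nth_map x); first by rewrite nth_enum_rank.
  by rewrite -cardE ltn_ord.
by move=> x y; rewrite /rr !ffunE E E.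
Qed.

Lemma iso_rel_iso n (R1 R2 : lat_rel n) :
  lattice_iso (rr R1) (rr R2) -> rel_iso R1 R2.
Proof.
case=> f [bf H]; have inj := bij_inj bf.
apply/existsP; exists (perm inj); apply/forallP => x; apply/forallP => y.
by rewrite !permE -/(rr R1 x y) H.
Qed.

Lemma rel_iso_iso n (R1 R2 : lat_rel n) :
  rel_iso R1 R2 -> lattice_iso (rr R1) (rr R2).
Proof.
case/existsP => p /forallP H; exists p; split; first exact: (injF_bij (@perm_inj _ p)).
by move=> x y; apply/eqP; exact: (forallP (H x) y).
Qed.

Lemma rel_iso_equiv n : equivalence_rel (@rel_iso n).
Proof.
move=> x y z; split.
  apply: iso_rel_iso; exists id; split=> //; exact: (injF_bij (fun a b (e : id a = id b) => e)).
move=> xy; apply/idP/idP => H.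
  by apply: iso_rel_iso; apply: iso_trans (iso_sym (rel_iso_iso xy)) (rel_iso_iso H).
by apply: iso_rel_iso; apply: iso_trans (rel_iso_iso xy) (rel_iso_iso H).
Qed.

Definition Dset (P : forall T : finType, rel T -> Prop) n :=
  [set R : lat_rel n | `[< P 'I_n (fun x y => R x y) >]].
Definition Part (P : forall T : finType, rel T -> Prop) n :=
  equivalence_partition (@rel_iso n) (Dset P n).

Lemma Part_partition P n : partition (Part P n) (Dset P n).
Proof. by apply: equivalence_partitionP => x y z _ _ _; apply: rel_iso_equiv. Qed.

Lemma count_ge (P : forall T : finType, rel T -> Prop) n (Y : finType) (h : Y -> lat_rel n) :
  (forall y, P 'I_n (rr (h y))) -> (forall y1 y2, rel_iso (h y1) (h y2) -> y1 = y2) ->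
  #|Y| <= count_classes P n.
Proof.
move=> HP Hinj.
have pP := Part_partition P n; case/and3P: pP => /eqP cov triv _.
have hD : forall y, h y \in Dset P n by move=> y; rewrite inE; apply/asboolP; exact: HP.
have inj : injective (fun y => pblock (Part P n) (h y)).
  move=> y1 y2 E; apply: Hinj.
  have := pblock_equivalence_partition (fun x y z _ _ _ => @rel_iso_equiv n x y z) (hD y1) (hD y2).
  move=> <-; change (h y2 \in pblock (Part P n) (h y1)); rewrite E mem_pblock cov; exact: hD.
rewrite /count_classes -/(Dset P n) -/(Part P n) -(card_imset predT inj).
apply: subset_leq_card; apply/subsetP => C /imsetP [y _ ->].
by apply: pblock_mem; rewrite cov.
Qed.

Definition BL (P : forall T : finType, rel T -> Prop) n :=
  {C : {set lat_rel n} | C \in Part P n}.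

Definition rep (P : forall T : finType, rel T -> Prop) n (C : BL P n) : lat_rel n :=
  odflt [ffun _ => [ffun _ => false]] [pick R in val C].

Lemma rep_in P n (C : BL P n) : rep C \in val C.
Proof.
rewrite /rep; case: pickP => [x //|H].
have pP := Part_partition P n; case/and3P: pP => _ _ n0.
have E0 : val C = set0 by apply/setP => x; rewrite inE; exact: H.
by move: (valP C); rewrite E0 (negbTE n0).
Qed.

Lemma rep_P P n (C : BL P n) : P 'I_n (rr (rep C)).
Proof.
have pP := Part_partition P n; case/and3P: pP => /eqP cov _ _.
have : rep C \in cover (Part P n) by apply/bigcupP; exists (val C); [exact: valP|exact: rep_in].
by rewrite cov inE => /asboolP.
Qed.

Lemma rep_inj P n (C1 C2 : BL P n) : rel_iso (rep C1) (rep C2) -> C1 = C2.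
Proof.
move=> H; apply: val_inj.
have pP := Part_partition P n; case/and3P: pP => /eqP cov triv _.
have m1 : rep C1 \in Dset P n by rewrite -cov; apply/bigcupP; exists (val C1); [exact: valP|exact: rep_in].
have m2 : rep C2 \in Dset P n by rewrite -cov; apply/bigcupP; exists (val C2); [exact: valP|exact: rep_in].
rewrite -(def_pblock triv (valP C1) (rep_in C1)) -(def_pblock triv (valP C2) (rep_in C2)).
apply: esym; apply: same_pblock => //.
by rewrite /Part pblock_equivalence_partition // => x y z _ _ _; apply: rel_iso_equiv.
Qed.

Lemma card_BL P n : #|{: BL P n}| = count_classes P n.
Proof. by rewrite card_sig. Qed.

Lemma card_vsum (T1 T2 : finType) (leB : rel T2) :
  is_lattice leB -> #|{: (T1 + {y : T2 | ~~ is_bot leB y})%type}| = #|T1| + #|T2|.-1.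
Proof.
move=> LB; have [b Hb] := lat_bot LB; case: LB => _ [_ AB _] _ _.
rewrite card_sum card_sig; congr (_ + _).
rewrite -(cardC (fun y => is_bot leB y)).
have -> : #|(fun y => is_bot leB y)| = 1.
  rewrite -(card1 b); apply: eq_card => y; rewrite !inE.
  apply/idP/eqP => [Hy|->//]; apply: AB; rewrite (forallP Hy) (forallP Hb) //.
by rewrite add1n /=; apply: eq_card => y; rewrite !inE.
Qed.

Lemma main_ineq (F : forall T : finType, rel T -> Prop)
  (F_lat : forall (T : finType) (le : rel T), F T le -> is_lattice le)
  (F_iso : forall (T1 T2 : finType) (le1 : rel T1) (le2 : rel T2),
      lattice_iso le1 le2 -> F T1 le1 -> F T2 le2)
  (F_vsum : forall (T1 T2 : finType) (le1 : rel T1) (le2 : rel T2),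
      F T1 le1 -> F T2 le2 -> F _ (vsum_le le1 le2)) n :
  1 < n ->
  \sum_(2 <= k < n.+1) fam_count_vi F k * fam_count F (n - k + 1) <= fam_count F n.
Proof.
move=> n1.
pose Pvi := fun (T : finType) (le : rel T) => F T le /\ vert_indec le.
rewrite -[2]/(0 + 2) big_addn big_mkord.
have -> : n.+1 - 2 = n.-1 by lia.
pose Y := {i : 'I_n.-1 & (BL Pvi (i + 2) * BL F (n - (i + 2) + 1))%type}.
have cY : #|{: Y}| = \sum_(i < n.-1) fam_count_vi F (i + 2) * fam_count F (n - (i + 2) + 1).
  rewrite card_tagged sumnE big_map big_enum /=; apply: eq_bigr => i _.
  by rewrite card_prod !card_BL.
rewrite -cY.
pose h := fun y : Y => match y with existT i p =>
   to_rel (vsum_le (rr (rep p.1)) (rr (rep p.2))) n end.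
have cardV : forall (i : 'I_n.-1) (A : BL Pvi (i + 2)) (B : BL F (n - (i + 2) + 1)),
   #|{: ('I_(i + 2) + {y : 'I_(n - (i + 2) + 1) | ~~ is_bot (rr (rep B)) y})%type}| = n.
  move=> i A B; rewrite card_vsum; last exact: F_lat (rep_P B).
  rewrite !card_ord; have := ltn_ord i; lia.
rewrite /fam_count; apply: (@count_ge F n _ h).
  case=> i [A B].
  exact:  (F_iso _ _ (vsum_le (rr (rep A)) (rr (rep B))) _ (to_rel_iso (vsum_le (rr (rep A)) (rr (rep B))) (cardV i A B))
            (F_vsum _ _ _ _ (rep_P A).1 (rep_P B))).
case=> i1 [A1 B1] [i2 [A2 B2]] /= H.
have I1 := to_rel_iso (vsum_le (rr (rep A1)) (rr (rep B1))) (cardV i1 A1 B1).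
have I2 := to_rel_iso (vsum_le (rr (rep A2)) (rr (rep B2))) (cardV i2 A2 B2).
have V := iso_trans I1 (iso_trans (rel_iso_iso H) (iso_sym I2)).
have [c [iA iB]] := vsum_parts (F_lat _ _ (rep_P A1).1) (rep_P A1).2
   (ltac:(by rewrite card_ord addn2)) (F_lat _ _ (rep_P B1))
   (F_lat _ _ (rep_P A2).1) (rep_P A2).2
   (ltac:(by rewrite card_ord addn2)) (F_lat _ _ (rep_P B2)) V.
rewrite !card_ord in c.
have e : i1 = i2 by apply: val_inj => /=; lia.
subst i2.
have eA := rep_inj (iso_rel_iso iA); have eB := rep_inj (iso_rel_iso iB).
by rewrite eA eB.
Qed.

Theorem theorem2p6 (F : forall T : finType, rel T -> Prop)
  (F_lat : forall (T : finType) (le : rel T), F T le -> is_lattice le)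
  (F_iso : forall (T1 T2 : finType) (le1 : rel T1) (le2 : rel T2),
      lattice_iso le1 le2 -> F T1 le1 -> F T2 le2)
  (F_single : F unit single_le)
  (F_vsum : forall (T1 T2 : finType) (le1 : rel T1) (le2 : rel T2),
      F T1 le1 -> F T2 le2 -> F _ (vsum_le le1 le2))
  (N : nat) (hN : 2 <= N) (g : nat -> nat)
  (g1 : g 1 = 1)
  (g_low : forall n, 2 <= n <= N ->
      g n = \sum_(2 <= k < n.+1) fam_count_vi F k * g (n - k + 1))
  (g_high : forall n, N < n ->
      g n = \sum_(2 <= k < N.+1) fam_count_vi F k * g (n - k + 1)) :
  (forall n, 1 <= n -> g n <= fam_count F n) /\
  exists c : nat -> nat,
    (forall j, 1 <= j < N -> c j = fam_count_vi F j.+1) /\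
    (forall n, N < n -> g n = \sum_(1 <= j < N) c j * g (n - j)).
Proof.
split.
  elim/ltn_ind => n IH n1.
  have [->|n2] := eqVneq n 1.
    rewrite g1 /fam_count.
    have := @count_ge F 1 unit (fun _ => to_rel single_le 1).
    rewrite card_unit; apply.
      by move=> _; apply: F_iso (to_rel_iso single_le card_unit) F_single.
    by case; case.
  have n2' : 1 < n by lia.
  have step : forall M, 1 <= M -> M <= n ->
      \sum_(2 <= k < M.+1) fam_count_vi F k * g (n - k + 1) <= fam_count F n.
    move=> M M1 Mn; apply: leq_trans (main_ineq F_lat F_iso F_vsum n2').
    have c1 : 2 <= M.+1 by lia.
    have c2 : M.+1 <= n.+1 by lia.
    rewrite (@big_cat_nat _ _ _ M.+1 2 n.+1 _ _ c1 c2) /=.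
    apply: leq_trans (leq_addr _ _).
    rewrite big_nat [X in _ <= X]big_nat; apply: leq_sum => k /andP [k2 kM].
    by rewrite leq_mul2l IH ?orbT //; lia.
  have [nN|Nn] := leqP n N.
    by rewrite g_low ?n2' //; apply: step => //; lia.
  by rewrite g_high //; apply: step; lia.
exists (fun j => fam_count_vi F j.+1); split=> // n Nn.
rewrite g_high // -[2]/(1 + 1) big_addn.
have -> : N.+1 - 1 = N by lia.
apply: eq_big_nat => j /andP [j1 jN].
by rewrite addn1; congr (_ * g _); lia.
Qed.
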